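(* Let $\mathcal{A}$ be a complex unital Banach algebra, let $p,q\in\mathcal{A}$ be idempotents, let $m\in\mathbb{N}$, and let $\gamma_1,\lambda_1,\dots,\lambda_m\in\mathbb{C}$ with $\lambda_1\gamma_1\neq0$. Then $$\lambda_1p+\gamma_1q-\lambda_1pq+\lambda_2\big(pqp-(pq)^2\big)+\cdots+\lambda_m\big((pq)^{m-1}p-(pq)^m\big)$$ is Drazin invertible (respectively, g-Drazin invertible) if and only if $$\lambda_1-\lambda_1pq+\lambda_2\big(pqp-(pq)^2\big)+\cdots+\lambda_m\big((pq)^{m-1}p-(pq)^m\big)$$ is Drazin invertible (respectively, g-Drazin invertible).
   Context: $\mathcal{A}$ is a complex unital Banach algebra with unit $1$; an idempotent is an element $e$ with $e^2=e$. An element $a$ is Drazin invertible if there exists $b\in\mathcal{A}$ with $ab=ba$, $bab=b$, and $(a(1-ab))^n=0$ for some $n\in\mathbb{N}$; g-Drazin invertible if there exists $b$ with $ab=ba$, $bab=b$, and $a(1-ab)$ quasinilpotent (spectral radius $0$). The terms $\lambda_k\big((pq)^{k-1}p-(pq)^k\big)$ for $k=2,\dots,m$ appear in the sums (for $m=1$ only the $\lambda_1$ terms appear). *)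

(* Defs.v *)
From HB Require Import structures.
From mathcomp Require Import all_boot all_order all_algebra.
From mathcomp Require Import all_classical all_reals all_analysis.
From mathcomp Require Import complex.

Set Implicit Arguments.
Unset Strict Implicit.
Unset Printing Implicit Defensive.

Import Order.TTheory GRing.Theory Num.Theory.
Local Open Scope ring_scope.
Local Open Scope classical_set_scope.

Record banach_norm (R : realType) (A : algType R[i]) := BanachNorm {
  bnorm :> A -> R ;
  bnorm_ge0 : forall x, 0 <= bnorm x ;
  bnorm_eq0 : forall x, bnorm x = 0 -> x = 0 ;
  bnormD : forall x y, bnorm (x + y) <= bnorm x + bnorm y ;
  bnormZ : forall (c : R[i]) x, bnorm (c *: x) = ComplexField.Normc.normc c * bnorm x ;
  bnormM : forall x y, bnorm (x * y) <= bnorm x * bnorm y ;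
  bnorm1 : bnorm 1 = 1 ;
  bnorm_complete : forall u : nat -> A,
    (forall e : R, 0 < e -> exists N : nat, forall i j : nat,
        (N <= i)%N -> (N <= j)%N -> bnorm (u i - u j) < e) ->
    exists l : A, forall e : R, 0 < e -> exists N : nat, forall i : nat,
        (N <= i)%N -> bnorm (u i - l) < e
}.

Section Defs.
Context {R : realType} {A : algType R[i]}.

Definition is_idempotent (e : A) : Prop := e * e = e.

Definition invertible (a : A) : Prop := exists b : A, a * b = 1 /\ b * a = 1.

Definition spectrum (a : A) : set R[i] := [set l | ~ invertible (l%:A - a)].

Definition spectral_radius (a : A) : R := sup [set ComplexField.Normc.normc l | l in spectrum a].

Definition quasinilpotent (a : A) : Prop := spectral_radius a = 0.

Definition drazin_invertible (a : A) : Prop :=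
  exists b : A, [/\ a * b = b * a, b * a * b = b &
                    exists n : nat, (a * (1 - a * b)) ^+ n = 0].

Definition gdrazin_invertible (a : A) : Prop :=
  exists b : A, [/\ a * b = b * a, b * a * b = b &
                    quasinilpotent (a * (1 - a * b))].
End Defs.

(* Main.v *)
Require Import Defs.
From Stdlib Require Ncring Ncring_tac.
From HB Require Import structures.
From mathcomp Require Import all_boot all_order all_algebra.
From mathcomp Require Import all_classical all_reals all_analysis.
From mathcomp Require Import complex.
From mathcomp Require Import lra.
Import Order.TTheory GRing.Theory Num.Theory.
Local Open Scope ring_scope.
Set Implicit Arguments.
Unset Strict Implicit.
Unset Printing Implicit Defensive.

#[global] Instance T_ops (T : pzRingType) : @Ncring.Ring_ops T 0%R 1%R (@GRing.add T) (@GRing.mul T) (fun x y => x - y) (@GRing.opp T) (@eq T) := {}.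
#[global] Instance T_ring (T : pzRingType) : @Ncring.Ring T 0%R 1%R (@GRing.add T) (@GRing.mul T) (fun x y => x - y) (@GRing.opp T) (@eq T) (T_ops T).
Proof.
constructor.
- exact RelationClasses.eq_equivalence.
- by move=> x y -> z w ->.
- by move=> x y -> z w ->.
- by move=> x y -> z w ->.
- by move=> x y ->.
- exact: add0r.
- exact: addrC.
- exact: addrA.
- exact: mul1r.
- exact: mulr1.
- exact: mulrA.
- exact: mulrDl.
- move=> x y z; exact: (mulrDr z x y).
- by [].
- exact: subrr.
Qed.

Ltac zsimp := rewrite ?(subrr, mulr0, mul0r, addr0, add0r, subr0, sub0r, oppr0).

Section Gen.
Variable T : pzRingType.



Definition ginv (a : T) := exists b, a * b = 1 /\ b * a = 1.
Definition gcentral (z : T) := forall a, z * a = a * z.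
Definition DIg (P : T -> Prop) (a : T) :=
  exists b, [/\ a * b = b * a, b * a * b = b & P (a * (1 - a * b))].

Lemma jac1 (a b : T) : ginv (1 - a * b) -> ginv (1 - b * a).
Proof.
move=> [w [h1 h2]]; exists (1 + b * w * a); split.
- have -> : (1 - b*a) * (1 + b*w*a) = 1 + b * ((1 - a*b) * w - 1) * a
    by Ncring_tac.non_commutative_ring.
  by rewrite h1; zsimp.
- have -> : (1 + b*w*a) * (1 - b*a) = 1 + b * (w * (1 - a*b) - 1) * a
    by Ncring_tac.non_commutative_ring.
  by rewrite h2; zsimp.
Qed.

Lemma ginvM (a b : T) : ginv a -> ginv b -> ginv (a * b).
Proof.
move=> [a' [ha1 ha2]] [b' [hb1 hb2]]; exists (b' * a'); split.
- by rewrite -mulrA (mulrA b) hb1 mul1r ha1.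
- by rewrite -mulrA (mulrA a') ha2 mul1r hb2.
Qed.

Lemma ginv_cancel (z x : T) : ginv z -> ginv (z * x) -> ginv x.
Proof.
move=> [zi [hz1 hz2]] [v [hv1 hv2]].
have xv : x * v = zi.
  by rewrite -(mul1r (x*v)) -hz2 -mulrA (mulrA z) hv1 mulr1.
exists (v * z); split; first by rewrite mulrA xv hz2.
by rewrite -mulrA hv2.
Qed.

Lemma central_inv (z zi : T) : gcentral z -> z * zi = 1 -> zi * z = 1 -> gcentral zi.
Proof.
move=> zc h1 h2 a.
by rewrite -[zi * a]mulr1 -h1 mulrA -(mulrA zi a z) -zc mulrA h2 mul1r.
Qed.

Lemma jacz (z s t : T) : gcentral z -> ginv z -> ginv (z - s * t) -> ginv (z - t * s).
Proof.
move=> zc zu; have [zi [h1 h2]] := zu.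
have zic := central_inv zc h1 h2.
move=> H.
have e1 : z - s * t = z * (1 - (zi * s) * t).
  rewrite mulrBr mulr1 !mulrA h1 mul1r; done.
have e2 : z - t * s = z * (1 - t * (zi * s)).
  by rewrite mulrBr mulr1 (mulrA t) -zic mulrA !mulrA h1 mul1r.
rewrite e2; apply: ginvM => //; apply: jac1.
by apply: (ginv_cancel zu); rewrite -e1.
Qed.

Lemma ginv_comm (x u v : T) : u * v = 1 -> v * u = 1 -> x * u = u * x -> x * v = v * x.
Proof.
move=> h1 h2 c.
apply: subr0_eq.
have -> : x * v - v * x = v * x * (u * v - 1) - (v * u - 1) * x * v + v * (u * x - x * u) * v
  by Ncring_tac.non_commutative_ring.
by rewrite h1 h2 c; zsimp.
Qed.


Definition nilp (r : T) := exists n, r ^+ n = 0.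

Lemma ginv_1nil (u : T) n : u ^+ n = 0 -> ginv (1 - u).
Proof.
move=> hn; exists (\sum_(i < n) u ^+ i).
have c : GRing.comm u (\sum_(i < n) u ^+ i).
  by apply: commr_sum => i _; apply: commrX; apply: commr_refl.
have h := subrX1 u n; rewrite hn sub0r in h.
have h' : (1 - u) * \sum_(i < n) u ^+ i = 1 by rewrite -opprB mulNr -h opprK.
split=> //.
by rewrite mulrBr mulr1 -c -{1}(mul1r (\sum_(i < n) u ^+ i)) -mulrBl.
Qed.

Lemma ginv_nil (z r : T) : gcentral z -> ginv z -> nilp r -> ginv (z - r).
Proof.
move=> zc zu [n hn]; have [zi [h1 h2]] := zu.
have zic := central_inv zc h1 h2.
have -> : z - r = z * (1 - zi * r) by rewrite mulrBr mulr1 mulrA h1 mul1r.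
apply: ginvM => //; apply: (@ginv_1nil _ n).
by rewrite exprMn_comm ?hn ?mulr0 //; exact: zic.
Qed.

Lemma expr_cline (s t : T) n : (s * t) ^+ n.+1 = s * (t * s) ^+ n * t.
Proof.
elim: n => [|n IH]; first by rewrite expr1 expr0 mulr1.
by rewrite exprSr IH exprSr !mulrA.
Qed.

Lemma nil_cline (s t : T) : nilp (t * s) -> nilp (s * t).
Proof. by move=> [n hn]; exists n.+1; rewrite expr_cline hn mulr0 mul0r. Qed.

Lemma cline (P : T -> Prop) (Pc : forall s t, P (t * s) -> P (s * t)) (a b : T) :
  DIg P (a * b) -> DIg P (b * a).
Proof.
move=> [c [wc cwc Pw]].
have h1 : a * b * c * c = c * c * (a * b).
  apply: subr0_eq.
  have -> : a * b * c * c - c * c * (a * b) =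
     (a * b * c - c * (a * b)) * c + c * (a * b * c - c * (a * b))
    by Ncring_tac.non_commutative_ring.
  by rewrite wc; zsimp.
have h2 : a * b * (a * b) * c * c = a * b * c.
  apply: subr0_eq.
  have -> : a * b * (a * b) * c * c - a * b * c =
     a * b * (a * b * c - c * (a * b)) * c + a * b * (c * (a * b) * c - c)
    by Ncring_tac.non_commutative_ring.
  by rewrite wc cwc; zsimp.
have h3 : c * c * (a * b) * (a * b) * c * c = c * c.
  apply: subr0_eq.
  have -> : c * c * (a * b) * (a * b) * c * c - c * c =
     c * (c * (a * b) - a * b * c) * (a * b) * c * c
     + (c * (a * b) * c - c) * (a * b) * c * c + (c * (a * b) * c - c) * c
    by Ncring_tac.non_commutative_ring.
  by rewrite wc cwc; zsimp.
exists (b * c * c * a); split.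
- apply: subr0_eq.
  have -> : b * a * (b * c * c * a) - b * c * c * a * (b * a) =
     b * (a * b * c * c - c * c * (a * b)) * a by Ncring_tac.non_commutative_ring.
  by rewrite h1; zsimp.
- apply: subr0_eq.
  have -> : b * c * c * a * (b * a) * (b * c * c * a) - b * c * c * a =
     b * (c * c * (a * b) * (a * b) * c * c - c * c) * a by Ncring_tac.non_commutative_ring.
  by rewrite h3; zsimp.
- have -> : b * a * (1 - b * a * (b * c * c * a)) =
     b * ((1 - a * b * c) * a) + b * (a * b * c - a * b * (a * b) * c * c) * a
    by Ncring_tac.non_commutative_ring.
  rewrite h2 subrr mulr0 mul0r addr0; apply: Pc.
  have -> : (1 - a * b * c) * a * b = a * b * (1 - a * b * c)
             + a * b * (a * b * c - c * (a * b)) by Ncring_tac.non_commutative_ring.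
  have z0 : a * b * c - c * (a * b) = 0 by rewrite wc subrr.
  by rewrite z0; zsimp.
Qed.

Lemma DIg_scale (P : T -> Prop) (c ci : T) : gcentral c -> c * ci = 1 -> ci * c = 1 ->
  (forall r, P r -> P (c * r)) -> forall a, DIg P a -> DIg P (c * a).
Proof.
move=> cc h1 h2 Ps a [b [ab bab Pr]].
have cic := central_inv cc h1 h2.
have e1 : c * a * (ci * b) = a * b.
  apply: subr0_eq.
  have -> : c * a * (ci * b) - a * b = (c * a - a * c) * (ci * b) + a * (c * ci - 1) * b
    by Ncring_tac.non_commutative_ring.
  by rewrite cc h1; zsimp.
have e2 : ci * b * (c * a) = b * a.
  apply: subr0_eq.
  have -> : ci * b * (c * a) - b * a = ci * (b * c - c * b) * a + (ci * c - 1) * b * a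
    by Ncring_tac.non_commutative_ring.
  by rewrite cc h2; zsimp.
exists (ci * b); split.
- by rewrite e1 e2.
- rewrite e2; apply: subr0_eq.
  have -> : b * a * (ci * b) - ci * b = (b * a * ci - ci * (b * a)) * b + ci * (b * a * b - b)
    by Ncring_tac.non_commutative_ring.
  by rewrite cic bab; zsimp.
- by rewrite e1 -mulrA; apply: Ps.
Qed.


Lemma triU (P : T -> Prop) (e t : T) : e * e = e -> t * e = e ->
  (forall r, P r -> ginv (1 - r)) ->
  (forall Y N, Y = e * Y * (1 - e) -> N = (1 - e) * N * (1 - e) -> (P (Y + N) <-> P N)) ->
  DIg P t <-> DIg P ((1 - e) * t).
Proof.
move=> ee te Pinv Ptri.
set f := 1 - e.
have ef : e * f = 0 by rewrite /f mulrBr mulr1 ee subrr.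
have fe : f * e = 0 by rewrite /f mulrBl mul1r ee subrr.
have ff : f * f = f by rewrite {2}/f mulrBr mulr1 fe subr0.
have fte : f * t * e = 0 by rewrite -mulrA te fe.
have ftf : f * t * f = f * t by rewrite {2}/f mulrBr mulr1 fte subr0.
have eplusf : e + f = 1 by rewrite /f addrC subrK.
split.
- move=> [b [tb btb PR]].
  have tbb : t * b * b = b by rewrite tb btb.
  have tbe : t * (b * e) = b * e by rewrite mulrA tb -mulrA te.
  have be : b * e = e.
    pose u := e - b * e.
    have h1 : (1 - t * b) * u = u.
      apply: subr0_eq.
      have -> : (1 - t * b) * u - u = - (t * (b * e) - b * e) + (t * b * b - b) * e
        by rewrite /u; Ncring_tac.non_commutative_ring.
      by rewrite tbe tbb; zsimp.
    have h2 : t * u = u by rewrite /u mulrBr te tbe.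
    have h3 : (1 - t * (1 - t * b)) * u = 0.
      by rewrite mulrBl mul1r -mulrA h1 h2 subrr.
    have [v [hv1 hv2]] := Pinv _ PR.
    have : u = 0 by rewrite -[u]mul1r -hv2 -mulrA h3 mulr0.
    by rewrite /u => /subr0_eq.
  have fbe : f * b * e = 0 by rewrite -mulrA be fe.
  have fbf : f * b * f = f * b by rewrite {2}/f mulrBr mulr1 fbe subr0.
  have fbtf : f * b * t * f = f * b * t.
    by rewrite {2}/f mulrBr mulr1 -(mulrA (f * b) t e) te fbe subr0.
  exists (f * b); split.
  + by rewrite !mulrA ftf fbf -!mulrA tb.
  + by rewrite !mulrA fbf fbtf -!mulrA (mulrA b t b) btb.
  + pose R := t * (1 - t * b).
    have Re : R * e = 0 by rewrite /R mulrBr mulr1 mulrBl -!mulrA be !te subrr.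
    have ftt : f * t * t * f = f * t * t by rewrite {2}/f mulrBr mulr1 -(mulrA (f * t) t e) te fte subr0.
    have fR : f * R = f * t * (1 - f * t * (f * b)).
      by rewrite /R mulrBr mulr1 mulrBr mulrBr mulr1 !mulrA ftf ftt.
    have Rf : R * f = R by rewrite /f mulrBr mulr1 Re subr0.
    have RfR : R = e * R * f + f * R * f by rewrite -!mulrDl eplusf mul1r Rf.
    have fRf : f * R * f = f * R by rewrite -mulrA Rf.
    rewrite -fR -fRf; apply/(Ptri (e * R * f)).
    * by rewrite !mulrA ee -(mulrA _ f f) ff.
    * by rewrite !mulrA ff -(mulrA _ f f) ff.
    * by rewrite -RfR.
- move=> [d [Dd dDd PN]].
  move: Dd dDd PN; set D := f * t => Dd dDd PN.
  have eD : e * D = 0 by rewrite /D mulrA ef mul0r.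
  have fD : f * D = D by rewrite /D mulrA ff.
  have De : D * e = 0 by exact: fte.
  have Df : D * f = D by exact: ftf.
  pose B := e * t * f.
  have eB : e * B = B by rewrite /B !mulrA ee.
  have Bf : B * f = B by rewrite /B -mulrA ff.
  have Be : B * e = 0 by rewrite /B -mulrA fe mulr0.
  have fB : f * B = 0 by rewrite /B !mulrA fe !mul0r.
  have tdec : t = e + B + D.
    apply: subr0_eq.
    have -> : t - (e + B + D) = e * (t * e - e) + (e * e - e)
      by rewrite /B /D /f; Ncring_tac.non_commutative_ring.
    by rewrite te ee; zsimp.
  clearbody B D.
  have ddD : d * d * D = d by rewrite -mulrA -Dd mulrA dDd.
  have Ddd : D * d * d = d by rewrite Dd dDd.
  have df : d * f = d by rewrite -{1}ddD -mulrA Df ddD.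
  have fd : f * d = d by rewrite -{1}Ddd !mulrA fD Ddd.
  have de : d * e = 0 by rewrite -{1}df -mulrA fe mulr0.
  have ed : e * d = 0 by rewrite -{1}fd mulrA ef mul0r.
  pose N := D * (1 - D * d).
  have [v [hv1 hv2]] : ginv (1 - N) by apply: Pinv.
  pose pi := f - D * d.
  have pie : pi * e = 0 by rewrite /pi mulrBl fe -mulrA de mulr0 subrr.
  have NDpi : N = D * pi.
  by rewrite /N /pi !mulrBr mulr1 De subr0.
  have piD : pi * D = N by rewrite /N /pi mulrBl fD mulrBr mulr1 -!mulrA Dd.
  have pipi : pi * pi = pi.
    apply: subr0_eq.
    have -> : pi * pi - pi = (f * f - f) - (f * D - D) * d - D * (d * f - d) + D * (d * D * d - d)
      by rewrite /pi; Ncring_tac.non_commutative_ring.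
    by rewrite ff fD df dDd; zsimp.
  have pid : pi * d = 0 by rewrite /pi mulrBl fd Ddd subrr.
  have Bpi : B * pi = B - B * (D * d) by rewrite /pi mulrBr Bf.
  clearbody pi N.
  have Npi : N * pi = N by rewrite NDpi -mulrA pipi.
  have piN : pi * N = N by rewrite NDpi mulrA piD Npi.
  have piv : pi * v = v * pi.
    apply: (ginv_comm hv1 hv2).
    apply: subr0_eq.
    have -> : pi * (1 - N) - (1 - N) * pi = (N * pi - N) - (pi * N - N) by Ncring_tac.non_commutative_ring.
    by rewrite piN Npi; zsimp.
  have Ne : N * e = 0 by rewrite NDpi -mulrA pie mulr0.
  have ve : v * e = e.
    have h : (1 - N) * e = e by rewrite mulrBl mul1r Ne subr0.
    by rewrite -{1}h mulrA hv2 mul1r.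
  pose K := B * pi * v.
  pose X := K - B * d.
  have eK : e * K = K by rewrite /K !mulrA eB.
  have Ke : K * e = 0 by rewrite /K -mulrA ve -mulrA pie mulr0.
  have fK : f * K = 0 by rewrite /K !mulrA fB !mul0r.
  have BB : B * B = 0 by rewrite -{1}Bf -mulrA fB mulr0.
  have DB : D * B = 0 by rewrite -{1}eB mulrA De mul0r.
  have dB : d * B = 0 by rewrite -{1}df -mulrA fB mulr0.
  have Kf : K * f = K by rewrite /f mulrBr mulr1 Ke subr0.
  have KB : K * B = 0 by rewrite -{1}Kf -mulrA fB mulr0.
  have eX : e * X = X by rewrite /X mulrBr eK mulrA eB.
  have BX : B * X = 0 by rewrite /X mulrBr /K !mulrA BB !mul0r subrr.
  have DX : D * X = 0 by rewrite /X mulrBr /K !mulrA DB !mul0r subrr.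
  have Xe : X * e = 0 by rewrite /X mulrBl Ke -mulrA de mulr0 subrr.
  have XB : X * B = 0 by rewrite /X mulrBl KB -mulrA dB mulr0 subrr.
  have fX : f * X = 0 by rewrite /X mulrBr fK mulrA fB mul0r subrr.
  have KDd : K * D * d = 0.
    have piDd : pi * (D * d) = 0 by rewrite Dd mulrA pid mul0r.
    have -> : K * D * d = B * (pi * v - v * pi) * D * d + B * v * (pi * (D * d))
      by rewrite /K; Ncring_tac.non_commutative_ring.
    by rewrite piv piDd; zsimp.
  have piv1D : pi * v * (1 - D) = pi.
    rewrite piv -mulrA mulrBr mulr1 piD -{1}Npi.
    by rewrite -{1}(mul1r pi) -mulrBl mulrA hv2 mul1r.
  have KD : K - K * D = B * pi.
    by rewrite -{1}(mulr1 K) -mulrBr /K -!mulrA (mulrA pi) piv1D.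
  have Xdef : X = K - B * d by [].
  clearbody X K.
  pose b := e + X + d.
  have tbE : t * b = e + X + B * d + D * d.
    rewrite {1}tdec /b !mulrDl !mulrDr ee eX ed Be BX De DX; zsimp.
    by Ncring_tac.non_commutative_ring.
  have btE : b * t = e + B + X * D + d * D.
    rewrite tdec /b !mulrDl !mulrDr ee eB eD Xe XB de dB; zsimp.
    by Ncring_tac.non_commutative_ring.
  have be : b * e = e by rewrite /b !mulrDl ee Xe de; zsimp.
  have fb : f * b = d by rewrite /b !mulrDr fe fX fd; zsimp.
  exists b; split.
  + rewrite tbE btE -Dd; apply: subr0_eq.
    have -> : e + X + B * d + D * d - (e + B + X * D + D * d) =
       (K - K * D) - (B - B * (d * D)) by rewrite Xdef; Ncring_tac.non_commutative_ring.
    rewrite KD -Dd.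
    by rewrite Bpi; zsimp.
  + have Xf : X * f = X by rewrite /f mulrBr mulr1 Xe subr0.
    have XX : X * X = 0 by rewrite -{1}Xf -mulrA fX mulr0.
    have dX : d * X = 0 by rewrite -{1}df -mulrA fX mulr0.
    have bX : b * X = X by rewrite /b !mulrDl eX XX dX; zsimp.
    have bBd : b * (B * d) = B * d by rewrite /b !mulrDl !mulrA eB XB dB; zsimp.
    have XDd : X * D * d = - (B * d).
      apply: subr0_eq; rewrite opprK.
      have -> : X * D * d + B * d = K * D * d - B * (d * D * d - d)
        by rewrite Xdef; Ncring_tac.non_commutative_ring.
      by rewrite KDd dDd; zsimp.
    have bDd : b * (D * d) = d - B * d by rewrite /b !mulrDl !mulrA eD XDd dDd; zsimp; Ncring_tac.non_commutative_ring.
    rewrite -mulrA tbE !mulrDr be bX bBd bDd /b; Ncring_tac.non_commutative_ring.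
  + have ft : f * t = D by rewrite tdec !mulrDr fe fB fD; zsimp.
    have Dt : D * t = D * D by rewrite tdec !mulrDr De DB; zsimp.
    have Db : D * b = D * d by rewrite /b !mulrDr De DX; zsimp.
    pose R := t * (1 - t * b).
    have Re : R * e = 0 by rewrite /R mulrBr mulr1 mulrBl -!mulrA be !te subrr.
    have fR : f * R = D * (1 - D * d).
      apply: subr0_eq.
      have -> : f * R - D * (1 - D * d) =
        (f * t - D) * (1 - t * b) - (D * t - D * D) * b - D * (D * b - D * d)
        by rewrite /R; Ncring_tac.non_commutative_ring.
      by rewrite ft Dt Db; zsimp.
    have Rf : R * f = R by rewrite /f mulrBr mulr1 Re subr0.
    have RfR : R = e * R * f + f * R * f by rewrite -!mulrDl eplusf mul1r Rf.
    have fRf : f * R * f = f * R by rewrite -mulrA Rf.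
    rewrite -/R RfR; apply/(Ptri (e * R * f)).
    * by rewrite !mulrA ee -(mulrA _ f f) ff.
    * by rewrite !mulrA ff -(mulrA _ f f) ff.
    * by rewrite fRf fR.
Qed.


Section Corner.
Variables (e Y N : T).
Hypotheses (ee : e * e = e) (hY : Y = e * Y * (1 - e)) (hN : N = (1 - e) * N * (1 - e)).

Let fe : (1 - e) * e = 0. Proof. by rewrite mulrBl mul1r ee subrr. Qed.
Let ef : e * (1 - e) = 0. Proof. by rewrite mulrBr mulr1 ee subrr. Qed.
Let ff : (1 - e) * (1 - e) = 1 - e. Proof. by rewrite mulrBr mulr1 fe subr0. Qed.
Lemma cor_eY : e * Y = Y. Proof. by rewrite hY !mulrA ee. Qed.
Lemma cor_Ye : Y * e = 0. Proof. by rewrite hY -mulrA fe mulr0. Qed.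
Lemma cor_fY : (1 - e) * Y = 0. Proof. by rewrite hY !mulrA fe !mul0r. Qed.
Lemma cor_Ne : N * e = 0. Proof. by rewrite hN -(mulrA _ (1 - e) e) fe mulr0. Qed.
Lemma cor_fN : (1 - e) * N = N. Proof. by rewrite {1}hN !mulrA ff -hN. Qed.
Lemma cor_NY : N * Y = 0. Proof. by rewrite -cor_eY mulrA cor_Ne mul0r. Qed.
Lemma cor_YY : Y * Y = 0. Proof. by rewrite -{2}cor_eY mulrA cor_Ye mul0r. Qed.

Lemma cor_YNY k : Y * N ^+ k * Y = 0.
Proof.
case: k => [|k]; first by rewrite expr0 mulr1 cor_YY.
by rewrite exprSr -mulrA -mulrA cor_NY !mulr0.
Qed.

Lemma cor_pow k : (Y + N) ^+ k.+1 = N ^+ k.+1 + Y * N ^+ k.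
Proof.
elim: k => [|k IH]; first by rewrite expr1 expr0 mulr1 addrC.
rewrite exprSr IH !mulrDl !mulrDr cor_YNY.
rewrite exprSr -mulrA cor_NY mulr0 !add0r -(mulrA Y).
by rewrite -!exprSr.
Qed.

Lemma nil_tri : nilp (Y + N) <-> nilp N.
Proof.
split.
- move=> [[|n] hn].
    by exists 0%N; rewrite expr0 -(expr0 (Y + N)) hn.
  exists n.+1.
  have : (1 - e) * (Y + N) ^+ n.+1 = 0 by rewrite hn mulr0.
  rewrite cor_pow mulrDr mulrA cor_fY mul0r addr0.
  by rewrite exprS mulrA cor_fN -exprS.
- move=> [n hn]; exists n.+1.
  by rewrite cor_pow hn mulr0 exprS hn mulr0 addr0.
Qed.

Lemma aux_sq (z zi u M : T) : gcentral z -> z * zi = 1 -> zi * z = 1 ->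
  u * (z - M) = 1 -> M * e = 0 -> (u * Y) ^+ 2 = 0.
Proof.
move=> zc h1 h2 hu hM.
have zic := central_inv zc h1 h2.
have ue : u * e = zi * e.
  have h : u * (z * e) = e by rewrite -{2}(mul1r e) -hu -mulrA mulrBl hM subr0.
  have h' : z * (u * e) = e by rewrite mulrA zc -mulrA h.
  by rewrite -[in RHS]h' mulrA h2 mul1r.
rewrite expr2 -mulrA (mulrA Y u) -{2}cor_eY (mulrA (Y * u)) -(mulrA Y u e) ue.
by rewrite (mulrA Y zi) -zic -(mulrA zi Y e) cor_Ye !(mulr0, mul0r).
Qed.

Lemma inv_tri (z : T) : gcentral z -> ginv z ->
  ginv (z - (Y + N)) <-> ginv (z - N).
Proof.
move=> zc zu; have [zi [h1 h2]] := zu.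
split.
- move=> [w [w1 w2]].
  have sq := aux_sq zc h1 h2 w2 (_ : (Y + N) * e = 0).
  have {sq}sq : (- (w * Y)) ^+ 2 = 0.
    by rewrite sqrrN sq // mulrDl cor_Ye cor_Ne addr0.
  have -> : z - N = (z - (Y + N)) * (1 - - (w * Y)).
    rewrite opprK mulrDr mulr1 mulrA w1 mul1r; Ncring_tac.non_commutative_ring.
  by apply: ginvM; [exists w | apply: ginv_1nil sq].
- move=> [v [v1 v2]].
  have sq := aux_sq zc h1 h2 v2 cor_Ne.
  have -> : z - (Y + N) = (z - N) * (1 - v * Y).
    rewrite mulrBr mulr1 mulrA v1 mul1r; Ncring_tac.non_commutative_ring.
  by apply: ginvM; [exists v | apply: ginv_1nil sq].
Qed.

End Corner.

End Gen.

Section Conv.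
Variable T : pzRingType.

Lemma ginv_conv (a : T) : @ginv T^c a <-> ginv a.
Proof. by split=> [[b [h1 h2]]|[b [h1 h2]]]; exists b; split. Qed.

Lemma gcentral_conv (z : T) : gcentral z -> @gcentral T^c z.
Proof. by move=> zc a; rewrite /= [LHS]/(_ * _) /=; symmetry; apply: zc. Qed.

Lemma DIg_conv (P : T -> Prop) (a : T) : @DIg T^c P a <-> DIg P a.
Proof.
have key : forall b : T, a * b = b * a -> (1 - b * a) * a = a * (1 - a * b).
  move=> b h; apply: subr0_eq.
  have -> : (1 - b * a) * a - a * (1 - a * b) = a * (a * b - b * a) + (a * b - b * a) * a
    by Ncring_tac.non_commutative_ring.
  by rewrite h; zsimp.
split.
- move=> [b0 [h1 h2 h3]].
  pose b : T := b0.
  have h1' : a * b = b * a by symmetry; exact h1.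
  have h2' : b * (a * b) = b := h2.
  have h3' : P ((1 - b * a) * a) := h3.
  exists b; split => //; first by rewrite -mulrA.
  by rewrite -key.
- move=> [b [h1 h2 h3]]; exists b; split.
  + by symmetry; exact h1.
  + by change (b * (a * b) = b); rewrite mulrA.
  + by change (P ((1 - b * a) * a)); rewrite key.
Qed.

Lemma nilp_conv (a : T) : @nilp T^c a <-> nilp a.
Proof.
by split=> [[n hn]|[n hn]]; exists n; rewrite ?revrX // -hn -revrX.
Qed.

Lemma triL (P : T -> Prop) (e t : T) : e * e = e -> e * t = e ->
  (forall r, P r -> ginv (1 - r)) ->
  (forall Y N, Y = (1 - e) * Y * e -> N = (1 - e) * N * (1 - e) -> (P (Y + N) <-> P N)) ->
  DIg P t <-> DIg P (t * (1 - e)).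
Proof.
move=> ee et Pinv Ptri.
have := @triU T^c P e t ee et.
case.
- by move=> r /Pinv /ginv_conv.
- move=> Y N hY hN; apply: Ptri.
  + have hY' : (Y : T) = (1 - e) * ((Y : T) * e) := hY.
    by rewrite mulrA in hY'.
  + have hN' : (N : T) = (1 - e) * ((N : T) * (1 - e)) := hN.
    by rewrite mulrA in hN'.
- move=> H1 H2; split.
  + by move=> /(DIg_conv P t) /H1 /(DIg_conv P).
  + by move=> /(DIg_conv P) /H2 /(DIg_conv P t).
Qed.

Lemma inv_triL (e Y N z : T) : e * e = e -> Y = (1 - e) * Y * e -> N = (1 - e) * N * (1 - e) ->
  gcentral z -> ginv z -> ginv (z - (Y + N)) <-> ginv (z - N).
Proof.
move=> ee hY hN zc zu.
have := @inv_tri T^c e Y N ee _ _ z (gcentral_conv zc) ((ginv_conv z).2 zu).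
rewrite !ginv_conv; apply.
- by change (Y = (1 - e) * (Y * e)); rewrite mulrA.
- by change (N = (1 - e) * (N * (1 - e))); rewrite mulrA.
Qed.

Lemma nil_triL (e Y N : T) : e * e = e -> Y = (1 - e) * Y * e -> N = (1 - e) * N * (1 - e) ->
  nilp (Y + N) <-> nilp N.
Proof.
move=> ee hY hN.
have := @nil_tri T^c e Y N ee.
rewrite !nilp_conv; apply.
- by change (Y = (1 - e) * (Y * e)); rewrite mulrA.
- by change (N = (1 - e) * (N * (1 - e))); rewrite mulrA.
Qed.

End Conv.

Section Reals.
Variable R : realType.

Lemma bernoulli_ineq (h : R) n : 0 <= h -> 1 + n%:R * h <= (1 + h) ^+ n.
Proof.
move=> h0; elim: n => [|n IH]; first by rewrite mul0r addr0 expr0.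
rewrite exprSr -natr1.
have hn : 0 <= n%:R * h by apply: mulr_ge0.
set X := (1 + h) ^+ n in IH *.
nra.
Qed.

Lemma small_pow (r d : R) : 0 <= r -> r < 1 -> 0 < d -> exists N, r ^+ N < d.
Proof.
move=> r0 r1 d0.
have [->|rpos] := eqVneq r 0; first by exists 1%N; rewrite expr1.
have rp : 0 < r by rewrite lt_def rpos r0.
pose h := r^-1 - 1.
have hp : 0 < h by rewrite /h subr_gt0 invf_gt1.
pose N := Num.Def.archi_bound (d^-1 / h).
have HN : d^-1 / h < N%:R by apply: archi_boundP; apply: divr_ge0; [rewrite invr_ge0 ltW| rewrite ltW].
exists N.
have B := bernoulli_ineq N (ltW hp).
have e1 : (1 + h) = r^-1 by rewrite /h addrC subrK.
rewrite e1 exprVn in B.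
have rN0 : 0 < r ^+ N by apply: exprn_gt0.
have k1 : r ^+ N * (1 + N%:R * h) <= 1.
  apply: le_trans (ler_wpM2l (ltW rN0) B) _.
  by rewrite mulfV // expf_neq0.
have k2 : 1 < d * (1 + N%:R * h).
  have H1 : d^-1 < N%:R * h by move: HN; rewrite ltr_pdivrMr.
  have H2 : 1 < d * (N%:R * h) by rewrite mulrC -ltr_pdivrMr // div1r.
  lra.
have c0 : 0 < 1 + N%:R * h by apply: ltr_wpDr; [apply: mulr_ge0; [apply: ler0n|apply: ltW]|].
rewrite -(ltr_pM2r c0); lra.
Qed.

Lemma bound0 (z a r : R) (dl : nat -> R) : 0 <= a -> 0 <= r -> r < 1 ->
  (forall e, 0 < e -> exists N, forall n, (N <= n)%N -> dl n < e) ->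
  (forall n, z <= a * dl n + r ^+ n) -> forall e, 0 < e -> z <= e.
Proof.
move=> a0 r0 r1 hdl hz e e0.
have e2 : 0 < e / 2 by apply: divr_gt0.
have a1 : 0 < a + 1 by lra.
have [N1 HN1] := hdl _ (divr_gt0 e2 a1).
have [N2 HN2] := small_pow r0 r1 e2.
pose n := maxn N1 N2.
have h1 := HN1 n (leq_maxl _ _).
have h2 : r ^+ n <= r ^+ N2 by apply: ler_wiXn2l => //; [apply: ltW|apply: leq_maxr].
have h3 : a * dl n <= e / 2.
  apply: le_trans (_ : (a + 1) * (e / 2 / (a + 1)) <= _).
    apply: le_trans (_ : a * (e / 2 / (a + 1)) <= _).
      by apply: ler_wpM2l => //; apply: ltW.
    by apply: ler_wpM2r; [apply: ltW; apply: divr_gt0|lra].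
  by rewrite mulrC divfK // gt_eqF.
have := hz n; lra.
Qed.

End Reals.

Section Ban.
Variables (R : realType) (A : algType R[i]) (nrm : banach_norm A).
Local Notation nc := (@ComplexField.Normc.normc R).

Lemma nc_ge0 (l : R[i]) : 0 <= nc l.
Proof. by case: l => a b; rewrite /ComplexField.Normc.normc sqrtr_ge0. Qed.

Lemma bnorm0 : nrm 0 = 0.
Proof. by rewrite -(scale0r (0 : A)) bnormZ ComplexField.Normc.normc0 mul0r. Qed.

Lemma bnormN (x : A) : nrm (- x) = nrm x.
Proof.
rewrite -scaleN1r bnormZ.
have -> : nc (-1) = 1 by rewrite (normcN (1 : R[i])) ComplexField.Normc.normc1.
by rewrite mul1r.
Qed.

Lemma bnormB (x y : A) : nrm (x - y) = nrm (y - x).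
Proof. by rewrite -bnormN opprB. Qed.

Lemma bnorm_sum (I : Type) (rr : seq I) (F : I -> A) :
  nrm (\sum_(i <- rr) F i) <= \sum_(i <- rr) nrm (F i).
Proof.
elim: rr => [|i rr IH]; first by rewrite !big_nil bnorm0.
rewrite !big_cons; apply: le_trans (bnormD _ _ _) _.
by apply: lerD.
Qed.

Lemma bnormX (v : A) n : nrm (v ^+ n) <= nrm v ^+ n.
Proof.
elim: n => [|n IH]; first by rewrite !expr0 bnorm1.
rewrite !exprS; apply: le_trans (bnormM _ _ _) _.
by apply: ler_pM => //; apply: bnorm_ge0.
Qed.

Lemma bnorm_small (x : A) : (forall e : R, 0 < e -> nrm x <= e) -> x = 0.
Proof.
move=> H; apply: (@bnorm_eq0 _ _ nrm).
have x0 := bnorm_ge0 nrm x.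
move: x0; rewrite le_eqVlt => /orP [/eqP <- //| xp].
have := H _ (divr_gt0 xp (ltr0n _ 2)).
lra.
Qed.

Lemma inv_1sub (v : A) : nrm v < 1 -> ginv (1 - v).
Proof.
move=> v1.
set r := nrm v.
have r0 : 0 <= r by apply: bnorm_ge0.
pose s n := \sum_(i < n) v ^+ i.
have geo : forall m n, (m <= n)%N -> \sum_(m <= i < n) r ^+ i * (1 - r) = r ^+ m - r ^+ n.
  move=> m n mn.
  have := telescope_sumr (fun k => - r ^+ k) mn.
  rewrite opprK addrC => <-; apply: eq_bigr => i _.
  by rewrite exprSr opprK mulrBr mulr1 addrC.
have sdiff : forall m n, (m <= n)%N -> nrm (s n - s m) <= r ^+ m / (1 - r).
  move=> m n mn.
  have -> : s n - s m = \sum_(m <= i < n) v ^+ i.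
    rewrite /s -!(big_mkord xpredT (fun i => v ^+ i)) (big_cat_nat (leq0n m) mn) /=.
    by rewrite addrC addrK.
  apply: le_trans (bnorm_sum _ _) _.
  apply: le_trans (_ : \sum_(m <= i < n) r ^+ i <= _).
    by rewrite big_seq_cond [X in _ <= X]big_seq_cond; apply: ler_sum => i _; apply: bnormX.
  have r1p : 0 < 1 - r by rewrite subr_gt0.
  rewrite ler_pdivlMr // mulr_suml geo //.
  by rewrite lerBlDr lerDl exprn_ge0.
have cauchy : forall e : R, 0 < e -> exists N : nat, forall i j : nat,
    (N <= i)%N -> (N <= j)%N -> nrm (s i - s j) < e.
  move=> e e0.
  have r1p : 0 < 1 - r by rewrite subr_gt0.
  have [N HN] := small_pow r0 v1 (mulr_gt0 e0 r1p).
  exists N => i j Ni Nj.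
  have key : forall a b, (N <= b)%N -> (b <= a)%N -> nrm (s a - s b) < e.
    move=> a b Nb ba.
    apply: le_lt_trans (sdiff _ _ ba) _.
    rewrite ltr_pdivrMr //.
    apply: le_lt_trans HN.
    by apply: ler_wiXn2l => //; apply: ltW.
  have [ji|ij] := leqP j i; first exact: key.
  by rewrite bnormB; apply: key => //; apply: ltnW.
have [L HL] := @bnorm_complete _ _ nrm _ cauchy.
have comm : forall n, GRing.comm v (s n).
  by move=> n; apply: commr_sum => i _; apply: commrX; apply: commr_refl.
have tel : forall n, (1 - v) * s n = 1 - v ^+ n.
  move=> n; have h := subrX1 v n.
  by rewrite -opprB mulNr -h opprB.
have tel2 : forall n, s n * (1 - v) = 1 - v ^+ n.
  move=> n; rewrite -tel mulrBr mulr1 mulrBl mul1r; congr (_ - _).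
  by rewrite (comm n).
have dl : forall e : R, 0 < e -> exists N, forall n, (N <= n)%N -> nrm (L - s n) < e.
  by move=> e e0; have [N HN] := HL e e0; exists N => n Nn; rewrite bnormB; apply: HN.
have a0 : 0 <= nrm (1 - v) by apply: bnorm_ge0.
exists L; split.
- apply: subr0_eq; apply: bnorm_small; apply: (bound0 a0 r0 v1 dl) => n.
  have -> : (1 - v) * L - 1 = (1 - v) * (L - s n) - v ^+ n.
    by rewrite mulrBr tel; Ncring_tac.non_commutative_ring.
  apply: le_trans (bnormD _ _ _) _; rewrite bnormN.
  by apply: lerD; [apply: bnormM | apply: bnormX].
- apply: subr0_eq; apply: bnorm_small; apply: (bound0 a0 r0 v1 dl) => n.
  have -> : L * (1 - v) - 1 = (L - s n) * (1 - v) - v ^+ n.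
    by rewrite mulrBl tel2; Ncring_tac.non_commutative_ring.
  apply: le_trans (bnormD _ _ _) _; rewrite bnormN.
  apply: lerD; last by apply: bnormX.
  by rewrite mulrC; apply: bnormM.
Qed.

End Ban.

Section Spec.
Variables (R : realType) (A : algType R[i]) (nrm : banach_norm A).
Local Notation nc := (@ComplexField.Normc.normc R).

Lemma alg_central (k : R[i]) : gcentral (k%:A : A).
Proof. by move=> a; rewrite mulr_algl mulr_algr. Qed.

Lemma alg_ginv (k : R[i]) : k != 0 -> ginv (k%:A : A).
Proof.
move=> k0; exists (k^-1%:A); split; rewrite mulr_algl scalerA ?divff ?mulVf //.
- by rewrite scale1r.
- by rewrite scale1r.
Qed.

Lemma neumann (u : A) (l : R[i]) : nrm u < nc l -> ginv (l%:A - u).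
Proof.
move=> H.
have u0 := bnorm_ge0 nrm u.
have ncp : 0 < nc l by apply: le_lt_trans H.
have l0 : l != 0.
  apply/eqP => l0; move: ncp; rewrite l0 ComplexField.Normc.normc0; lra.
have -> : l%:A - u = l%:A * (1 - l^-1 *: u).
  by rewrite mulrBr mulr1 mulr_algl scalerA divff // scale1r.
apply: ginvM; first exact: alg_ginv.
have := @inv_1sub _ _ nrm (l^-1 *: u); apply; rewrite bnormZ ComplexField.Normc.normcV.
by rewrite mulrC ltr_pdivrMr // mul1r.
Qed.

Definition QN (u : A) := forall l : R[i], l != 0 -> ginv (l%:A - u).

Lemma qn_QN (u : A) : quasinilpotent u <-> QN u.
Proof.
rewrite /quasinilpotent /spectral_radius.
set S := (X in sup X).
split.
- move=> h l l0; apply: contrapT => ninv.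
  have Sl : S (nc l) by exists l.
  have ub : has_ubound S.
    exists (nrm u) => y [x hx <-].
    rewrite leNgt; apply/negP => H; apply: hx; exact: neumann H.
  have := ub_le_sup ub Sl; rewrite h => H.
  have : nc l = 0 by apply/eqP; rewrite eq_le H nc_ge0.
  by move/ComplexField.Normc.eq0_normc => /eqP; rewrite (negbTE l0).
- move=> hQ.
  have sub : forall y, S y -> y = 0.
    move=> y [x hx <-]; have [->|x0] := eqVneq x 0.
      exact: ComplexField.Normc.normc0.
    by exfalso; apply: hx; apply: hQ.
  case: (pselect (exists y, S y)) => [[y Sy]|nS].
  + have -> : S = [set 0]%classic.
      apply/seteqP; split => z /=; first by move/sub.
      by move=> ->; rewrite -(sub y Sy).
    exact: sup1.
  + have -> : S = set0 by apply/seteqP; split => z //= Sz; apply: nS; exists z.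
    exact: sup0.
Qed.

Lemma gdrazin_DIg (a : A) : gdrazin_invertible a <-> DIg QN a.
Proof.
split=> [[b [h1 h2 h3]]|[b [h1 h2 h3]]]; exists b; split => //.
- exact/qn_QN.
- exact/qn_QN.
Qed.

Lemma drazin_DIg (a : A) : drazin_invertible a <-> DIg (@nilp A) a.
Proof. by []. Qed.

End Spec.

Section Chain.
Variables (R : realType) (A : algType R[i]).

Lemma scale_iff (P : A -> Prop) (Ps : forall (k : R[i]) r, k != 0 -> P r -> P (k%:A * r))
  (k : R[i]) (a : A) : k != 0 -> DIg P a <-> DIg P (k%:A * a).
Proof.
move=> k0.
have ki0 : k^-1 != 0 by rewrite invr_neq0.
have h1 : (k%:A : A) * k^-1%:A = 1 by rewrite mulr_algl scalerA divff // scale1r.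
have h2 : (k^-1%:A : A) * k%:A = 1 by rewrite mulr_algl scalerA mulVf // scale1r.
split.
- exact: (DIg_scale (alg_central k) h1 h2 (fun r => Ps k r k0)).
- move=> H; have := DIg_scale (alg_central k^-1) h2 h1 (fun r => Ps _ r ki0) H.
  by rewrite mulrA h2 mul1r.
Qed.

Lemma subKr1 (p : A) : 1 - (1 - p) = p.
Proof. by rewrite opprB addrC subrK. Qed.

Lemma chain (P : A -> Prop)
  (Pc : forall s t, P (t * s) -> P (s * t))
  (Ps : forall (k : R[i]) r, k != 0 -> P r -> P (k%:A * r))
  (Pinv : forall r, P r -> ginv (1 - r))
  (PU : forall e Y N, e * e = e -> Y = e * Y * (1 - e) -> N = (1 - e) * N * (1 - e) ->
          (P (Y + N) <-> P N))
  (PL : forall e Y N, e * e = e -> Y = (1 - e) * Y * e -> N = (1 - e) * N * (1 - e) ->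
          (P (Y + N) <-> P N))
  (p q c : A) (g l : R[i]) : p * p = p -> q * q = q -> p * c = c -> c * q = 0 ->
  g != 0 -> l != 0 ->
  DIg P (c + g *: q) <-> DIg P (c + l *: (1 - p)).
Proof.
move=> pp qq pc cq g0 l0.
have cl := fun a b => @cline A P Pc a b.
have sc : forall (k : R[i]) (a : A), k != 0 -> k^-1%:A * (k *: a) = a.
  by move=> k a k0; rewrite mulr_algl scalerA mulVf // scale1r.
have Hx : DIg P (c + g *: q) <-> DIg P c.
  pose c' := g^-1%:A * c.
  rewrite (scale_iff Ps _ (invr_neq0 g0)) mulrDr sc //.
  rewrite [in X in _ <-> X](scale_iff Ps _ (invr_neq0 g0)) -/c'.
  have c'q : c' * q = 0 by rewrite /c' -mulrA cq mulr0.
  have te : (c' + q) * q = q by rewrite mulrDl c'q qq add0r.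
  rewrite (triU qq te Pinv (fun Y N hY hN => PU _ _ _ qq hY hN)).
  have -> : (1 - q) * (c' + q) = (1 - q) * c'.
    by rewrite mulrDr (mulrBl q 1 q) mul1r qq subrr addr0.
  split; first by move/cl; rewrite mulrBr mulr1 c'q subr0.
  by move=> H; apply: cl; rewrite mulrBr mulr1 c'q subr0.
have Hy : DIg P (c + l *: (1 - p)) <-> DIg P c.
  pose c'' := l^-1%:A * c.
  rewrite (scale_iff Ps _ (invr_neq0 l0)) mulrDr sc //.
  rewrite [in X in _ <-> X](scale_iff Ps _ (invr_neq0 l0)) -/c''.
  have pc'' : p * c'' = c''.
    by rewrite /c'' mulrA -(alg_central l^-1 p) -mulrA pc.
  have fc'' : (1 - p) * c'' = 0 by rewrite mulrBl mul1r pc'' subrr.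
  have ff : (1 - p) * (1 - p) = 1 - p by rewrite mulrBr mulr1 mulrBl mul1r pp subrr subr0.
  have et : (1 - p) * (c'' + (1 - p)) = 1 - p by rewrite mulrDr fc'' ff add0r.
  rewrite (triL ff et Pinv (fun Y N hY hN => PL _ _ _ ff hY hN)).
  rewrite subKr1.
  have -> : (c'' + (1 - p)) * p = c'' * p.
    by rewrite mulrDl mulrBl mul1r pp subrr addr0.
  split; first by move/cl; rewrite pc''.
  by move=> H; apply: cl; rewrite pc''.
by rewrite Hx Hy.
Qed.

End Chain.

Section Inst.
Variables (R : realType) (A : algType R[i]) (nrm : banach_norm A).

Lemma central1 : gcentral (1 : A).
Proof. by move=> a; rewrite mul1r mulr1. Qed.

Lemma ginv1 : ginv (1 : A).
Proof. by exists 1; rewrite mulr1. Qed.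

Lemma chain_nil (p q c : A) (g l : R[i]) : p * p = p -> q * q = q -> p * c = c -> c * q = 0 ->
  g != 0 -> l != 0 ->
  DIg (@nilp A) (c + g *: q) <-> DIg (@nilp A) (c + l *: (1 - p)).
Proof.
apply: chain.
- by move=> s t; apply: nil_cline.
- move=> k r k0 [n hn]; exists n.
  by rewrite exprMn_comm ?hn ?mulr0 //; apply: alg_central.
- by move=> r; apply: ginv_nil; [apply: central1|apply: ginv1].
- move=> e Y N ee hY hN; exact: (nil_tri ee hY hN).
- move=> e Y N ee hY hN; exact: (nil_triL ee hY hN).
Qed.

Lemma chain_qn (p q c : A) (g l : R[i]) : p * p = p -> q * q = q -> p * c = c -> c * q = 0 ->
  g != 0 -> l != 0 ->
  DIg (@QN R A) (c + g *: q) <-> DIg (@QN R A) (c + l *: (1 - p)).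
Proof.
apply: chain.
- move=> s t H k k0.
  exact: (jacz (@alg_central _ A k) (@alg_ginv _ A k k0) (H k k0)).
- move=> k r k0 H j j0.
  have kl0 : k^-1 * j != 0 by rewrite mulf_neq0 ?invr_neq0.
  have -> : j%:A - k%:A * r = k%:A * ((k^-1 * j)%:A - r).
    have e1 : (k%:A : A) * (k^-1 * j)%:A = j%:A by rewrite mulr_algl scalerA mulVKf.
    by rewrite mulrBr e1.
  by apply: ginvM; [exact: (@alg_ginv _ A k k0)|apply: H].
- by move=> r H; have := H 1 (oner_neq0 _); rewrite scale1r.
- move=> e Y N ee hY hN; split => H k k0.
  + by apply/(inv_tri ee hY hN (@alg_central _ A k) (@alg_ginv _ A k k0)); apply: H.
  + by apply/(inv_tri ee hY hN (@alg_central _ A k) (@alg_ginv _ A k k0)); apply: H.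
- move=> e Y N ee hY hN; split => H k k0.
  + by apply/(inv_triL ee hY hN (@alg_central _ A k) (@alg_ginv _ A k k0)); apply: H.
  + by apply/(inv_triL ee hY hN (@alg_central _ A k) (@alg_ginv _ A k k0)); apply: H.
Qed.

End Inst.

Theorem proposition3p1 (R : realType) (A : algType R[i]) (nrm : banach_norm A) (p q : A)
  (m : nat) (gam1 : R[i]) (lam : nat -> R[i]) :
  is_idempotent p -> is_idempotent q -> (1 <= m)%N -> lam 1%N * gam1 != 0 ->
  let S := \sum_(2 <= k < m.+1) lam k *: ((p * q) ^+ k.-1 * p - (p * q) ^+ k) in
  let x := lam 1%N *: p + gam1 *: q - lam 1%N *: (p * q) + S in
  let y := (lam 1%N)%:A - lam 1%N *: (p * q) + S in
  (drazin_invertible x <-> drazin_invertible y) /\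
  (gdrazin_invertible x <-> gdrazin_invertible y).
Proof.
intros pp qq _ lg S x y.
rewrite /is_idempotent in pp qq.
move: lg; rewrite mulf_eq0 negb_or => /andP [l0 g0].
have pPQ : forall j, (0 < j)%N -> p * (p * q) ^+ j = (p * q) ^+ j.
  by case=> [//|j] _; rewrite exprS !mulrA pp.
have pS : p * S = S.
  rewrite /S mulr_sumr; apply: eq_big_nat => k /andP [k2 _].
  have k1 : (0 < k.-1)%N by case: k k2 => [|[|k]].
  have k0 : (0 < k)%N by case: k k2 k1.
  by rewrite -scalerAr mulrBr mulrA !pPQ.
have Sq : S * q = 0.
  rewrite /S mulr_suml big1_seq // => k; rewrite mem_index_iota => /andP [_ /andP [k2 _]].
  have ek : (p * q) ^+ k = (p * q) ^+ k.-1 * (p * q) by rewrite -exprSr (ltn_predK k2).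
  rewrite -scalerAl ek.
  have -> : ((p * q) ^+ k.-1 * p - (p * q) ^+ k.-1 * (p * q)) * q =
     (p * q) ^+ k.-1 * p * (q - q * q) by Ncring_tac.non_commutative_ring.
  by rewrite qq subrr mulr0 scaler0.
pose c := lam 1%N *: (p - p * q) + S.
have pc : p * c = c.
  by rewrite /c mulrDr pS -scalerAr mulrBr mulrA pp.
have cq : c * q = 0.
  by rewrite /c mulrDl Sq addr0 -scalerAl mulrBl -mulrA qq subrr scaler0.
have xE : x = c + gam1 *: q.
  by rewrite /x /c scalerBr; Ncring_tac.non_commutative_ring.
have yE : y = c + lam 1%N *: (1 - p).
  by rewrite /y /c !scalerBr; Ncring_tac.non_commutative_ring.
rewrite xE yE; split.
- exact: (chain_nil pp qq pc cq g0 l0).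
- rewrite !(gdrazin_DIg nrm); exact: (chain_qn pp qq pc cq g0 l0).
Qed.
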